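(* Let $G$ be a graph without isolated vertices. Then (1) $\dfrac{2|V(G)|}{\Delta(G)+1}\le \gamma_{\times 2}(G)\le \gamma_{gr}^{\times 2}(G)\le |V(G)|+1-\delta(G)$; (2) $\gamma_{gr}(G)+1\le \gamma_{gr}^{\times 2}(G)\le 2\gamma_{gr}(G)$.
   Context: Graphs are finite, simple, undirected; $N[v]$ is the closed neighborhood, $\Delta(G)$ and $\delta(G)$ the maximum and minimum degree. A set $D$ is a double dominating set if $|N[w]\cap D|\ge 2$ for all $w\in V(G)$; $\gamma_{\times 2}(G)$ is the minimum size of a double dominating set. A sequence $(v_1,\dots,v_k)$ of distinct vertices is legal if $N[v_i]\setminus\bigcup_{j<i}N[v_j]\neq\emptyset$ for every $i\ge 2$; it is a dominating sequence if moreover $\{v_1,\dots,v_k\}$ is a dominating set; $\gamma_{gr}(G)$ (Grundy domination number) is the maximum length of a dominating sequence. A sequence $S=(v_1,\dots,v_k)$ of distinct vertices is a double neighborhood sequence (DNS) if for each $i$ some $u\in N[v_i]$ satisfies $|\{j<i: u\in N[v_j]\}|\le 1$; it is a double dominating sequence (DDS) if in addition its vertex set is a double dominating set. $\gamma_{gr}^{\times 2}(G)$ (Grundy double domination number) is the maximum length of a DDS. *)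

(* Defs.v *)
(* A simple graph is a symmetric irreflexive relation e on a finType T. *)
From mathcomp Require Import all_boot all_order all_algebra.
Set Implicit Arguments. Unset Strict Implicit. Unset Printing Implicit Defensive.

Section Graph.
Variables (T : finType) (e : rel T).

Definition cnbh (v : T) : {set T} := [set u | (u == v) || e v u].

Definition deg (v : T) : nat := #|[set u | e v u]|.
Definition maxdeg : nat := \max_(v : T) deg v.
(* minimum degree; the default #|T| is never attained when T is nonempty *)
Definition mindeg : nat := \big[minn/#|T|]_(v : T) deg v.

Definition no_isolated : Prop := forall v : T, exists u, e v u.

Definition domset (D : {set T}) : bool :=
  [forall w, [exists v in D, w \in cnbh v]].

Definition ddomset (D : {set T}) : bool :=
  [forall w, 2 <= #|cnbh w :&: D|].

Definition gamma_x2 : nat := \big[minn/#|T|]_(D : {set T} | ddomset D) #|D|.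

(* legality: for i >= 2, N[v_i] \ U_{j<i} N[v_j] <> empty; prev = earlier vertices *)
Fixpoint legal_aux (prev s : seq T) : bool :=
  match s with
  | [::] => true
  | v :: s' =>
      (nilp prev || [exists w, (w \in cnbh v) && all (fun u => w \notin cnbh u) prev])
      && legal_aux (v :: prev) s'
  end.

Definition legal_seq (s : seq T) : bool := uniq s && legal_aux [::] s.

Definition dom_seq (s : seq T) : bool := legal_seq s && domset [set x in s].

Definition gamma_gr : nat :=
  \max_(i < #|T|.+1 | [exists t : i.-tuple T, dom_seq t]) i.

Fixpoint dns_aux (prev s : seq T) : bool :=
  match s with
  | [::] => true
  | v :: s' =>
      [exists u, (u \in cnbh v) && (count (fun x => u \in cnbh x) prev <= 1)]
      && dns_aux (v :: prev) s'
  end.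

Definition dns (s : seq T) : bool := uniq s && dns_aux [::] s.

Definition dds (s : seq T) : bool := dns s && ddomset [set x in s].

Definition gamma_gr_x2 : nat :=
  \max_(i < #|T|.+1 | [exists t : i.-tuple T, dds t]) i.

End Graph.

(* Main.v *)
Require Import Defs.
From mathcomp Require Import all_boot all_order all_algebra.
From mathcomp Require Import zify.
Import Order.TTheory GRing.Theory Num.Theory.

Section Aux.
Variables (T : finType) (e : rel T).

Lemma legal_aux_rcons prev s v :
  legal_aux e prev (rcons s v) =
  legal_aux e prev s &&
  ((nilp prev && nilp s) ||
   [exists w, (w \in cnbh e v) && all (fun u => w \notin cnbh e u) (prev ++ s)]).
Proof.
elim: s prev => [|x s IH] prev /=; first by rewrite cats0 andbT andbC.
rewrite IH andbA andbF /=; congr (_ && _).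
apply: eq_existsb => w; congr (_ && _).
by rewrite !all_cat /= andbCA.
Qed.

Lemma dns_aux_rcons prev s v :
  dns_aux e prev (rcons s v) =
  dns_aux e prev s &&
  [exists u, (u \in cnbh e v) && (count (fun x => u \in cnbh e x) (prev ++ s) <= 1)].
Proof.
elim: s prev => [|x s IH] prev /=; first by rewrite cats0 andbT.
rewrite IH andbA; congr (_ && _).
apply: eq_existsb => w; congr (_ && (_ <= _)).
rewrite !count_cat /=; lia.
Qed.

Lemma legal_dns prev s : legal_aux e prev s -> dns_aux e prev s.
Proof.
elim: s prev => [|v s IH] prev //= /andP[H1 H2]; rewrite IH // andbT.
case/orP: H1 => [/nilP ->|/existsP[w /andP[Hw Ha]]].
  by apply/existsP; exists v; rewrite /cnbh inE eqxx.
apply/existsP; exists w; rewrite Hw /=.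
suff -> : count (fun x => w \in cnbh e x) prev = 0 by [].
by apply/eqP; rewrite -leqn0 leqNgt -has_count -all_predC.
Qed.
End Aux.


Section Main.
Variables (T : finType) (e : rel T).
Hypotheses (esym : symmetric e) (eirr : irreflexive e) (noiso : no_isolated e).

Local Notation N := (cnbh e).
Local Notation cov s w := (count (fun x => w \in cnbh e x) s).

Lemma cnbh_sym w x : (w \in N x) = (x \in N w).
Proof. by rewrite !inE eq_sym esym. Qed.

Lemma cnbh_self v : v \in N v.
Proof. by rewrite inE eqxx. Qed.

Lemma size_le_card (s : seq T) : uniq s -> size s <= #|T|.
Proof. by move=> /card_uniqP <-; apply: max_card. Qed.

Lemma cov_card s w : uniq s -> cov s w = #|N w :&: [set x in s]|.
Proof.
move=> us; rewrite -size_filter -(card_uniqP (filter_uniq _ us)).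
apply: eq_card => x; by rewrite mem_filter !inE eq_sym esym.
Qed.

Lemma dns_ext [s w] : dns e s -> cov s w <= 1 ->
  exists v, (v \notin s) && dns e (rcons s v).
Proof.
move=> /andP[us ds] cw.
have [u ewu] := noiso w.
have uw : u != w by apply/eqP => uw; rewrite uw eirr in ewu.
have [v [vN vs]] : exists v, v \in N w /\ v \notin s.
  case ws: (w \in s); last by exists w; rewrite cnbh_self ws.
  case us': (u \in s); last by exists u; rewrite inE ewu orbT us'.
  have : size [:: w; u] <= cov s w.
    rewrite -size_filter; apply: uniq_leq_size.
      by rewrite /= inE eq_sym uw.
    move=> x; rewrite !inE mem_filter => /orP[]/eqP->.
      by rewrite cnbh_self ws.
    by rewrite us' cnbh_sym inE ewu orbT.
  by rewrite /=; lia.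
exists v; rewrite vs /dns rcons_uniq vs us /= dns_aux_rcons ds /=.
by apply/existsP; exists w; rewrite cnbh_sym vN.
Qed.

Lemma dns_step [s] : dns e s -> ~~ ddomset e [set x in s] ->
  exists v, dns e (rcons s v) && (size s < #|T|).
Proof.
move=> ds /forallPn[w]; rewrite -ltnNge ltnS => hw.
have us : uniq s by case/andP: ds.
have [v /andP[vs dv]] := dns_ext ds (leq_trans (eq_leq (cov_card s w us)) hw).
exists v; rewrite dv /=.
have := size_le_card _ (proj1 (andP dv)); rewrite size_rcons; exact.
Qed.

Lemma dns_max [n s] : #|T| - size s <= n -> dns e s ->
  exists t, dds e t && (size s <= size t).
Proof.
elim: n s => [|n IH] s hn ds.
  case dd: (ddomset e [set x in s]); first by exists s; rewrite /dds ds dd leqnn.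
  have [v /andP[_ hs]] := dns_step ds (negbT dd); lia.
case dd: (ddomset e [set x in s]); first by exists s; rewrite /dds ds dd leqnn.
have [v /andP[dv hs]] := dns_step ds (negbT dd).
have [t /andP[dt st]] := IH (rcons s v) ltac:(rewrite size_rcons; lia) dv.
by exists t; rewrite dt; rewrite size_rcons in st; lia.
Qed.

Lemma dns_strict s w : dns e s -> cov s w <= 1 ->
  exists t, dds e t && (size s < size t).
Proof.
move=> ds cw; have [v /andP[_ dv]] := dns_ext ds cw.
have [t /andP[dt st]] := dns_max (leqnn _) dv.
by exists t; rewrite dt -(size_rcons s v).
Qed.


Lemma legal_step (d : pred T) p v u : u \in N v ->
  legal_aux e [::] (filter d p) ->
  (d v -> forall y, y \in p -> d y -> u \notin N y) ->
  legal_aux e [::] (filter d (rcons p v)).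
Proof.
move=> uv lp H; rewrite filter_rcons; case dv: (d v) => //.
rewrite legal_aux_rcons lp /=; apply/orP; right; apply/existsP; exists u.
rewrite uv /=; apply/allP => y; rewrite mem_filter => /andP[dy yp].
exact: H.
Qed.

Lemma color [s] : dns e s -> exists c : pred T,
  legal_aux e [::] (filter c s) && legal_aux e [::] (filter (predC c) s).
Proof.
elim/last_ind: s => [|p v IH]; first by move=> _; exists predT.
rewrite /dns rcons_uniq dns_aux_rcons => /andP[/andP[vp up] /andP[dp]].
move=> /existsP[u /andP[uv cu]].
have [c /andP[l1 l2]] := IH (introT andP (conj up dp)).
have [b Hb] : exists b, forall y, y \in p -> c y = b -> u \notin N y.
  case hp: (has (fun x => u \in N x) p).
    have [x xp ux] := hasP hp; exists (~~ c x) => y yp cy.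
    apply/negP => uy.
    have xy : x != y by apply/eqP => xy; move: cy; rewrite -xy; by case: (c x).
    have : size [:: x; y] <= count (fun x => u \in N x) p.
      rewrite -size_filter; apply: uniq_leq_size; first by rewrite /= inE xy.
      by move=> z; rewrite !inE mem_filter => /orP[]/eqP->; apply/andP.
    by move=> h; have := leq_trans h cu.
  exists true => y yp _; apply/negP => uy.
  by move/negbT/hasPn: hp => /(_ y yp); rewrite uy.
pose c' := fun y => if y == v then b else c y.
have cc : {in p, c' =1 c}.
  by move=> y yp; rewrite /c'; case: eqP => // yv; rewrite -yv yp in vp.
have c'v : c' v = b by rewrite /c' eqxx.
exists c'; apply/andP; split.
  apply: (@legal_step c' p v u uv); first by rewrite (eq_in_filter cc).
  rewrite c'v => bt y yp; rewrite cc // => cy; apply: Hb => //.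
  by rewrite cy bt.
apply: (@legal_step (predC c') p v u uv).
  by rewrite (@eq_in_filter _ (predC c') (predC c)) // => y yp /=; rewrite cc.
rewrite /= c'v => bt y yp /=; rewrite cc // => cy; apply: Hb => //.
by move: cy bt; case: (c y); case: (b).
Qed.

Lemma legal_half [s] : dns e s -> exists t, legal_seq e t && (size s <= 2 * size t).
Proof.
move=> ds; have [c /andP[l1 l2]] := color ds.
have us : uniq s by case/andP: ds.
have := count_predC c s; rewrite -!size_filter => hs.
case: (leqP (size (filter (predC c) s)) (size (filter c s))) => h.
  by exists (filter c s); rewrite /legal_seq filter_uniq // l1; lia.
by exists (filter (predC c) s); rewrite /legal_seq filter_uniq // l2; lia.
Qed.

Lemma legal_ext [s] : legal_seq e s -> ~~ domset e [set x in s] ->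
  exists w, legal_seq e (rcons s w) && (size s < #|T|).
Proof.
move=> ls /forallPn[w]; rewrite negb_exists_in => /forall_inP Hw.
have ws : w \notin s.
  by apply/negP => ws; move: (Hw w); rewrite inE ws cnbh_self => /(_ isT).
have lw : legal_seq e (rcons s w).
  move: ls; rewrite /legal_seq rcons_uniq ws legal_aux_rcons => /andP[-> ->] /=; apply/orP; right.
  apply/existsP; exists w; rewrite cnbh_self /=.
  by apply/allP => x xs; apply: Hw; rewrite inE.
exists w; rewrite lw /=.
have := size_le_card _ (proj1 (andP lw)); rewrite size_rcons; exact.
Qed.

Lemma legal_max [n s] : #|T| - size s <= n -> legal_seq e s ->
  exists t, dom_seq e t && (size s <= size t).
Proof.
elim: n s => [|n IH] s hn ls.
  case dd: (domset e [set x in s]); first by exists s; rewrite /dom_seq ls dd leqnn.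
  have [v /andP[_ hs]] := legal_ext ls (negbT dd); lia.
case dd: (domset e [set x in s]); first by exists s; rewrite /dom_seq ls dd leqnn.
have [v /andP[dv hs]] := legal_ext ls (negbT dd).
have [t /andP[dt st]] := IH (rcons s v) ltac:(rewrite size_rcons; lia) dv.
by exists t; rewrite dt; rewrite size_rcons in st; lia.
Qed.

Lemma legal_cov [s] : 0 < #|T| -> legal_seq e s -> exists w, cov s w <= 1.
Proof.
move=> /card_gt0P[w0 _]; case/lastP: s => [|p v]; first by exists w0.
rewrite /legal_seq legal_aux_rcons => /andP[_ /andP[_ /orP[/andP[_ /nilP ->]|]]].
  by exists v => /=; case: (v \in N v).
move=> /existsP[w /andP[wv /allP aw]]; exists w.
rewrite -cats1 count_cat /= (eq_in_count (a2 := pred0)).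
  by rewrite count_pred0; case: (w \in N v).
by move=> x xp /=; apply/negbTE/aw.
Qed.

End Main.


Section Fin.
Variables (T : finType) (e : rel T).
Hypotheses (esym : symmetric e) (eirr : irreflexive e) (noiso : no_isolated e).
Hypothesis Tne : 0 < #|T|.

Local Notation N := (cnbh e).

Lemma card_seqset (t : seq T) : uniq t -> #|[set x in t]| = size t.
Proof. by move=> ut; rewrite cardsE; apply/card_uniqP. Qed.

Lemma dds_le_ggx2 t : dds e t -> size t <= gamma_gr_x2 e.
Proof.
move=> dt; have ht : size t < #|T|.+1.
  by rewrite ltnS; apply: size_le_card; case/andP: dt => /andP[].
have := @leq_bigmax_cond _ (fun i : 'I_#|T|.+1 => [exists t : i.-tuple T, dds e t])
  (fun i => nat_of_ord i) (Ordinal ht).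
by apply; apply/existsP; exists (in_tuple t).
Qed.

Lemma ggx2_le m : (forall t, dds e t -> size t <= m) -> gamma_gr_x2 e <= m.
Proof.
move=> H; apply/bigmax_leqP => i /existsP[t dt].
by have := H t dt; rewrite size_tuple.
Qed.

Lemma dom_le_gg t : dom_seq e t -> size t <= gamma_gr e.
Proof.
move=> dt; have ht : size t < #|T|.+1.
  by rewrite ltnS; apply: size_le_card; case/andP: dt => /andP[].
have := @leq_bigmax_cond _ (fun i : 'I_#|T|.+1 => [exists t : i.-tuple T, dom_seq e t])
  (fun i => nat_of_ord i) (Ordinal ht).
by apply; apply/existsP; exists (in_tuple t).
Qed.

Lemma gg_le m : (forall t, dom_seq e t -> size t <= m) -> gamma_gr e <= m.
Proof.
move=> H; apply/bigmax_leqP => i /existsP[t dt].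
by have := H t dt; rewrite size_tuple.
Qed.

Lemma bigminn_le (I : eqType) (r : seq I) (P : pred I) (F : I -> nat) x0 j :
  j \in r -> P j -> \big[minn/x0]_(i <- r | P i) F i <= F j.
Proof.
elim: r => [|x r IH] //= jr Pj; rewrite big_cons.
move: jr; rewrite inE => /orP[/eqP<-|jr]; first by rewrite Pj geq_minl.
case: (P x); last exact: IH.
by rewrite (leq_trans (geq_minr _ _)) // IH.
Qed.

Lemma gx2_le t : dds e t -> gamma_x2 e <= size t.
Proof.
case/andP => /andP[ut _] dd.
rewrite -card_seqset //; apply: bigminn_le => //; exact: mem_index_enum.
Qed.

Lemma card_N v : #|N v| = (deg e v).+1.
Proof.
have -> : N v = v |: [set u | e v u] by apply/setP => u; rewrite !inE.
by rewrite cardsU1 inE eirr.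
Qed.

Lemma sum_mem (A B : pred T) : \sum_(x in A) ((x \in B) : nat) = #|[predI A & B]|.
Proof.
rewrite (eq_bigr (fun x => if x \in B then 1 else 0)); last by move=> x _; case: (x \in B).
by rewrite -big_mkcondr -sum1_card; apply: eq_bigl => x; rewrite !inE.
Qed.

Lemma ddom_bound (D : {set T}) : ddomset e D -> 2 * #|T| <= #|D| * (maxdeg e).+1.
Proof.
move=> /forallP dd.
have h1 : 2 * #|T| <= \sum_(w : T) #|N w :&: D|.
  rewrite mulnC -sum_nat_const; apply: leq_sum => w _; exact: dd.
have h2 : \sum_(w : T) #|N w :&: D| = \sum_(v in D) #|N v|.
  transitivity (\sum_(w : T) \sum_(v in D) ((w \in N v) : nat)).
    apply: eq_bigr => w _; rewrite sum_mem; apply: eq_card => x.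
    rewrite !inE andbC; congr (_ && _); rewrite unfold_in /=; change (((x == w) || e w x) = (w \in N x)); by rewrite inE eq_sym esym.
  rewrite exchange_big; apply: eq_bigr => v _.
  by rewrite sum_mem; apply: eq_card => x; rewrite !inE.
have h3 : \sum_(v in D) #|N v| <= \sum_(v in D) (maxdeg e).+1.
  apply: leq_sum => v _; rewrite card_N ltnS; exact: (leq_bigmax (F := deg e)).
rewrite sum_nat_const in h3; lia.
Qed.

Lemma part1 : 2 * #|T| <= gamma_x2 e * (maxdeg e).+1.
Proof.
rewrite /gamma_x2; apply: (big_ind (fun x => 2 * #|T| <= x * (maxdeg e).+1)).
- case/card_gt0P: Tne => v _; have [u evu] := noiso v.
  have : 1 <= deg e v by apply/card_gt0P; exists u; rewrite inE.
  have := leq_bigmax (F := deg e) v; rewrite -/(maxdeg e); nia.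
- by move=> x y hx hy; rewrite /minn; case: ifP.
- by move=> D; exact: ddom_bound.
Qed.

End Fin.


Theorem proposition1 (T : finType) (e : rel T)
  (esym : symmetric e) (eirr : irreflexive e)
  (Tne : 0 < #|T|) (noiso : no_isolated e) :
  [/\ (((2 * #|T|)%:R / (maxdeg e).+1%:R : rat) <= (gamma_x2 e)%:R)%R,
      gamma_x2 e <= gamma_gr_x2 e,
      gamma_gr_x2 e <= #|T| + 1 - mindeg e,
      gamma_gr e + 1 <= gamma_gr_x2 e
    & gamma_gr_x2 e <= 2 * gamma_gr e].
Proof.
have legdns : forall s, legal_seq e s -> dns e s.
  by move=> s /andP[us ls]; rewrite /dns us legal_dns.
split.
- rewrite ler_pdivrMr ?ltr0Sn // -natrM ler_nat.
  exact: part1.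
- have [t /andP[dt _]] := @dns_max T e esym eirr noiso _ _ (leqnn (#|T| - size [::])) (isT : dns e [::]).
  exact: leq_trans (@gx2_le T e _ dt) (@dds_le_ggx2 T e _ dt).
- apply: ggx2_le => t; case/lastP: t => [|p v] //.
  case/andP => /andP[]; rewrite rcons_uniq => /andP[vp up].
  rewrite dns_aux_rcons => /andP[_ /existsP[u /andP[uv cu]]] _.
  have ut : uniq (rcons p v) by rewrite rcons_uniq vp up.
  have hd : mindeg e <= deg e u.
    rewrite /mindeg; exact: (@bigminn_le T (index_enum T) (fun _ => true) (deg e) #|T| u (mem_index_enum u) isT).
  have hc : #|cnbh e u :&: [set x in rcons p v]| <= 2.
    rewrite -(@cov_card T e esym) // -cats1 count_cat /=.
    by move: cu => /=; case: (u \in cnbh e v) => /=; lia.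
  have hU := cardsUI (cnbh e u) [set x in rcons p v].
  have hm : #|cnbh e u :|: [set x in rcons p v]| <= #|T| := max_card _.
  rewrite (@card_N T e eirr) (@card_seqset T _ ut) in hU.
  rewrite size_rcons in hU *; lia.
- have [w0 _] := card_gt0P Tne.
  have [t0 /andP[dt0 st0]] := @dns_strict T e esym eirr noiso [::] w0 isT isT.
  have X1 := leq_trans st0 (@dds_le_ggx2 T e _ dt0).
  suff : gamma_gr e <= (gamma_gr_x2 e).-1 by lia.
  apply: gg_le => t /andP[lt _].
  have [w cw] := @legal_cov T e _ Tne lt.
  have [t' /andP[dt' st']] := @dns_strict T e esym eirr noiso _ _ (legdns _ lt) cw.
  have := @dds_le_ggx2 T e _ dt'; lia.
- apply: ggx2_le => t dt.
  have [t1 /andP[lt1 s1]] := @legal_half T e _ (proj1 (andP dt)).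
  have [t2 /andP[dt2 s2]] := @legal_max T e _ _ (leqnn (#|T| - size t1)) lt1.
  have := @dom_le_gg T e _ dt2; lia.
Qed.
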